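(* Let $f\in\mathrm{Lip}_{[2]}(\mathbb{R})$ with $\|f\|_{\mathrm{Lip}_{[2]}(\mathbb{R})}\le 1$. Then for every $t\ge0$, $\mathbf{P}^0_t f\in\mathrm{Lip}_{[2]}(\mathbb{R})$: $\mathbf{P}^0_t f$ is $1$-Lipschitz and its derivative is $2$-Lipschitz. Furthermore $\mathscr{L}_0\mathbf{P}^0_t f$ is well defined and, for $t>0$, \[ \|\mathscr{L}_0\mathbf{P}^0_t f\|_\infty\le \frac{2}{1-e^{-t}}\,\|f'\|_\infty . \]
   Context: $Z$ denotes a standard Gumbel random variable (density $e^{-(x+e^{-x})}$ on $\mathbb{R}$). For $t\ge0$, $\mathbf{P}^0_t f(x)=\mathbb{E}\big[f\big(\max(x-t,\ Z+\log(1-e^{-t}))\big)\big]$ (convention $\log 0=-\infty$). $\mathscr{L}_0 f(x)=-f'(x)+e^{-x}\mathbb{E}[f'(x+Y)]$ with $Y\sim\mathcal{E}(1)$, which is the generator of $(\mathbf{P}^0_t)_{t\ge0}$. $\mathrm{Lip}_{[2]}(\mathbb{R})$ is the set of Lipschitz $f:\mathbb{R}\to\mathbb{R}$ whose derivative has a Lipschitz representative, with semi-norm $\|f\|_{\mathrm{Lip}_{[2]}(\mathbb{R})}=\max(\|f\|_{\mathrm{Lip}},\|f'\|_{\mathrm{Lip}})$, $\|g\|_{\mathrm{Lip}}$ being the best Lipschitz constant. *)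

(* Defs.v *)
From Stdlib Require Import Reals.
From Coquelicot Require Import Coquelicot.
Open Scope R_scope.

Definition lipschitz_with (L : R) (g : R -> R) : Prop :=
  forall x y, Rabs (g x - g y) <= L * Rabs (x - y).

(* Lip_[2](R): f Lipschitz, (everywhere) differentiable, with Lipschitz derivative.
   (A Lipschitz f whose a.e. derivative has a Lipschitz, hence continuous,
   representative is C^1 with that representative as its derivative.) *)
Definition in_Lip2 (f : R -> R) : Prop :=
  (forall x, ex_derive f x) /\
  (exists L, lipschitz_with L f) /\
  (exists L, lipschitz_with L (Derive f)).

Definition gumbel_density (z : R) : R := exp (- (z + exp (- z))).

(* max(x - t, z + log(1 - e^{-t})), with log 0 = -oo, i.e. = x when t = 0 *)
Definition gumbel_arg (t x z : R) : R :=
  if Rlt_le_dec 0 t then Rmax (x - t) (z + ln (1 - exp (- t))) else x - t.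

Definition P0_integrand (t : R) (f : R -> R) (x : R) : R -> R :=
  fun z => f (gumbel_arg t x z) * gumbel_density z.

Definition P0 (t : R) (f : R -> R) (x : R) : R :=
  RInt_gen (P0_integrand t f x) (Rbar_locally m_infty) (Rbar_locally p_infty).

Definition L0_integrand (f : R -> R) (x : R) : R -> R :=
  fun y => Derive f (x + y) * exp (- y).

Definition L0 (f : R -> R) (x : R) : R :=
  - Derive f x + exp (- x) *
      RInt_gen (L0_integrand f x) (at_point 0) (Rbar_locally p_infty).

(* Main.v *)
Require Import Defs.
From Stdlib Require Import Reals.
From Coquelicot Require Import Coquelicot.
From Stdlib Require Import Lra FunctionalExtensionality.
Open Scope R_scope.

Definition Phi (z : R) : R := exp (- exp (- z)).

Lemma Phi_deriv z : is_derive Phi z (gumbel_density z).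
Proof.
  unfold Phi, gumbel_density.
  auto_derive; auto.
  replace (- (z + exp (- z))) with ((- z) + - exp (- z)) by ring.
  rewrite exp_plus. ring.
Qed.

Lemma Phi_pos z : 0 < Phi z.
Proof. apply exp_pos. Qed.



Lemma Phi_le1 z : Phi z <= 1.
Proof.
  unfold Phi. rewrite <- exp_0. pose proof (exp_pos (- z)).
  left. apply exp_increasing. lra.
Qed.

Lemma dens_pos z : 0 <= gumbel_density z.
Proof. left; apply exp_pos. Qed.

Lemma dens_le1 z : gumbel_density z <= 1.
Proof.
  unfold gumbel_density. rewrite <- exp_0.
  pose proof (exp_ineq1_le (- z)).
  left. apply exp_increasing. lra.
Qed.

Lemma dens_eq z : gumbel_density z = exp (- z) * Phi z.
Proof.
  unfold gumbel_density, Phi.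
  replace (- (z + exp (- z))) with ((- z) + - exp (- z)) by ring.
  apply exp_plus.
Qed.

Lemma lip_continuous L g x : lipschitz_with L g -> continuous g x.
Proof.
  intros H. apply filterlim_locally. intros eps.
  assert (Hd : 0 < eps / (Rabs L + 1)).
  { apply Rdiv_lt_0_compat. apply cond_pos. pose proof (Rabs_pos L); lra. }
  exists (mkposreal _ Hd). intros y Hy.
  change (Rabs (g y - g x) < eps).
  change (Rabs (y - x) < eps / (Rabs L + 1)) in Hy.
  eapply Rle_lt_trans. apply H.
  apply Rle_lt_trans with (Rabs L * Rabs (y - x)).
  apply Rmult_le_compat_r. apply Rabs_pos. apply RRle_abs.
  apply Rle_lt_trans with (Rabs L * (eps / (Rabs L + 1))).
  apply Rmult_le_compat_l. apply Rabs_pos. lra.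
  pose proof (Rabs_pos L). pose proof (cond_pos eps).
  apply Rmult_lt_reg_r with (Rabs L + 1). lra.
  field_simplify; try lra.
Qed.

Lemma deriv_bound_lip L g x l : lipschitz_with L g -> is_derive g x l -> Rabs l <= L.
Proof.
  intros HL Hd. apply is_derive_Reals in Hd.
  destruct (Rle_or_lt (Rabs l) L) as [h|h]; auto.
  exfalso.
  destruct (Hd (Rabs l - L)) as [d Hdd]. lra.
  assert (Hh : (d/2) <> 0) by (pose proof (cond_pos d); lra).
  assert (Hh2 : Rabs (d/2) < d) by (pose proof (cond_pos d); rewrite Rabs_pos_eq; lra).
  specialize (Hdd _ Hh Hh2).
  assert (Rabs ((g (x + d/2) - g x) / (d/2)) <= L).
  { unfold Rdiv. rewrite Rabs_mult, Rabs_inv.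
    apply Rmult_le_reg_r with (Rabs (d/2)). apply Rabs_pos_lt; auto.
    rewrite Rmult_assoc, Rinv_l. 2: apply Rabs_no_R0; auto.
    rewrite Rmult_1_r. replace (Rabs (d/2)) with (Rabs ((x + d/2) - x)) by (f_equal; ring). apply HL. }
  pose proof (Rabs_triang_inv l ((g (x + d/2) - g x) / (d/2))).
  rewrite Rabs_minus_sym in Hdd. lra.
Qed.

Lemma lip_of_deriv (g g' : R -> R) L :
  (forall x, is_derive g x (g' x)) -> (forall x, Rabs (g' x) <= L) -> lipschitz_with L g.
Proof.
  intros Hd Hb x y.
  destruct (MVT_gen g y x g') as [c [_ Hc]].
  - intros; apply Hd.
  - intros. apply continuity_pt_filterlim. apply (ex_derive_continuous (V:=R_NormedModule)). eexists; apply Hd.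
  - rewrite Hc, Rabs_mult. apply Rmult_le_compat_r. apply Rabs_pos. apply Hb.
Qed.
Lemma lim_exp_neg c : 0 < c ->
  filterlim (fun z => exp (- (c * z))) (Rbar_locally p_infty) (locally 0).
Proof.
  intros Hc.
  assert (H : is_lim (fun z => exp (- (c * z))) p_infty 0).
  { apply (is_lim_comp (fun y => exp y) (fun z => - (c * z)) p_infty 0 m_infty).
    - apply is_lim_exp_m.
    - replace m_infty with (Rbar_opp (Rbar_mult c p_infty)).
      apply is_lim_opp, is_lim_scal_l, is_lim_id.
      simpl. destruct (Rle_dec 0 c); [|lra].
      destruct (Rle_lt_or_eq_dec 0 c r); [reflexivity|lra].
    - exists 0. intros; discriminate. }
  exact H.
Qed.

Lemma lim_negexp_p : is_lim (fun z => exp (- z)) p_infty 0.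
Proof.
  apply (is_lim_comp (fun y => exp y) (fun z => - z) p_infty 0 m_infty).
  - apply is_lim_exp_m.
  - replace m_infty with (Rbar_opp p_infty) by reflexivity.
    apply is_lim_opp, is_lim_id.
  - exists 0. intros; discriminate.
Qed.

Lemma lim_Phi_p : filterlim Phi (Rbar_locally p_infty) (locally 1).
Proof.
  assert (H : is_lim Phi p_infty 1).
  { unfold Phi.
    apply (is_lim_comp (fun y => exp y) (fun z => - exp (- z)) p_infty 1 0).
    - replace (Finite 1) with (Finite (exp 0)) by (rewrite exp_0; reflexivity). apply (is_lim_continuity (fun y => exp y)).
      apply derivable_continuous_pt, derivable_pt_exp.
    - replace (Finite 0) with (Rbar_opp 0) by (simpl; f_equal; ring).
      apply is_lim_opp, lim_negexp_p.
    - exists 0. intros x _ H. injection H. pose proof (exp_pos (- x)). lra. }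
  exact H.
Qed.

Lemma lim_Phi_m : filterlim Phi (Rbar_locally m_infty) (locally 0).
Proof.
  assert (H : is_lim Phi m_infty 0).
  { unfold Phi.
    apply (is_lim_comp (fun y => exp y) (fun z => - exp (- z)) m_infty 0 m_infty).
    - apply is_lim_exp_m.
    - replace m_infty with (Rbar_opp p_infty) at 2 by reflexivity.
      apply is_lim_opp.
      apply (is_lim_comp (fun y => exp y) (fun z => - z) m_infty p_infty p_infty).
      + apply is_lim_exp_p.
      + replace p_infty with (Rbar_opp m_infty) by reflexivity.
        apply is_lim_opp, is_lim_id.
      + exists 0. intros; discriminate.
    - exists 0. intros; discriminate. }
  exact H.
Qed.

Lemma lim_at_point (g : R -> R) b : filterlim g (at_point b) (locally (g b)).
Proof.
  intros P HP. unfold filtermap, at_point. apply locally_singleton. exact HP.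
Qed.
Lemma is_RInt_gen_of_lim (h : R -> R) a (F : (R -> Prop) -> Prop) {FF : ProperFilter F} l :
  (forall u v, ex_RInt h u v) ->
  filterlim (fun b => RInt h a b) F (locally l) -> is_RInt_gen h (at_point a) F l.
Proof.
  intros Hex Hl. unfold is_RInt_gen.
  apply filterlimi_lim_ext_loc with (f := fun ab => RInt h (fst ab) (snd ab)).
  - apply filter_forall. intros; apply (RInt_correct (V:=R_CompleteNormedModule)), Hex.
  - intros P HP. specialize (Hl P HP). unfold filtermap in *.
    exists (fun x => x = a) (fun b => P (RInt h a b)).
    + reflexivity.
    + exact Hl.
    + intros x y -> Hy. exact Hy.
Qed.

Lemma RInt_dom_bound (h k K : R -> R) u v :
  (forall x, continuous h x) ->
  (forall x, Rmin u v <= x <= Rmax u v -> Rabs (h x) <= k x /\ is_derive K x (k x) /\ continuous k x) ->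
  Rabs (RInt h u v) <= Rabs (K v - K u).
Proof.
  intros Hc Hd.
  assert (Hex : forall a b, ex_RInt h a b) by (intros; apply (ex_RInt_continuous (V:=R_CompleteNormedModule)); intros; apply Hc).
  assert (Hk : is_RInt k u v (K v - K u)).
  { apply (is_RInt_derive K k). intros; apply Hd; auto. intros; apply Hd; auto. }
  destruct (Rle_or_lt u v) as [Huv|Huv].
  - apply Rle_trans with (K v - K u); [|apply RRle_abs].
    apply (norm_RInt_le h k u v). auto.
    intros x Hx. apply Hd. rewrite Rmin_left, Rmax_right; auto.
    apply (RInt_correct (V:=R_CompleteNormedModule)), Hex. exact Hk.
  - rewrite <- opp_RInt_swap by apply Hex.
    change (Rabs (- RInt h v u) <= Rabs (K v - K u)).
    rewrite Rabs_Ropp, Rabs_minus_sym.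
    apply Rle_trans with (K u - K v); [|apply RRle_abs].
    apply (norm_RInt_le h k v u). lra.
    intros x Hx. apply Hd. rewrite Rmin_right, Rmax_left; lra.
    apply (RInt_correct (V:=R_CompleteNormedModule)), Hex.
    apply is_RInt_swap in Hk. replace (K u - K v) with (opp (K v - K u)) by (unfold opp; simpl; ring). exact Hk.
Qed.

Lemma ex_RInt_gen_dom (h k K : R -> R) (a L : R) (F : (R -> Prop) -> Prop) {FF : ProperFilter F} (P : R -> Prop) :
  (forall x, continuous h x) -> F P ->
  (forall u v x, P u -> P v -> Rmin u v <= x <= Rmax u v ->
     Rabs (h x) <= k x /\ is_derive K x (k x) /\ continuous k x) ->
  filterlim K F (locally L) ->
  ex_RInt_gen h (at_point a) F.
Proof.
  intros Hc HP Hd HK.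
  assert (Hex : forall a b, ex_RInt h a b) by (intros; apply (ex_RInt_continuous (V:=R_CompleteNormedModule)); intros; apply Hc).
  assert (exists y, filterlim (fun b => RInt h a b) F (locally y)) as [y Hy].
  { apply filterlim_locally_cauchy. intros eps.
    pose proof (proj1 (filterlim_locally K L) HK (pos_div_2 eps)) as HK2.
    exists (fun x => P x /\ ball L (pos_div_2 eps) (K x)). split.
    apply filter_and; auto.
    intros u v [Pu Bu] [Pv Bv].
    change (Rabs (K u - L) < eps / 2) in Bu.
    change (Rabs (K v - L) < eps / 2) in Bv.
    change (Rabs (RInt h a v - RInt h a u) < eps).
    rewrite <- (RInt_Chasles h a u v) by apply Hex.
    change (Rabs (RInt h a u + RInt h u v - RInt h a u) < eps).
    assert (E : forall p q : R, p + q - p = q) by (intros; ring). rewrite E.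
    eapply Rle_lt_trans. apply (RInt_dom_bound h k K u v Hc).
    intros; apply (Hd u v); auto.
    replace (K v - K u) with ((K v - L) - (K u - L)) by ring.
    eapply Rle_lt_trans. apply Rabs_triang. rewrite Rabs_Ropp. lra. }
  exists y. apply is_RInt_gen_of_lim; auto.
Qed.

Definition ca t := 1 - exp (- t).
Definition aa t := ln (ca t).
Definition hh (f : R -> R) t z := f (z + aa t) * gumbel_density z.
Definition CC f t := RInt_gen (hh f t) (at_point 0) (Rbar_locally p_infty).
Definition G f t x := f (x - t) * Phi (x - t - aa t) + (- RInt (hh f t) 0 (x - t - aa t) + CC f t).

Lemma ca_pos t : 0 < t -> 0 < ca t.
Proof. intros; unfold ca. assert (exp (- t) < 1). rewrite <- exp_0. apply exp_increasing. lra. lra. Qed.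

Lemma ca_le1 t : ca t <= 1.
Proof. unfold ca. pose proof (exp_pos (- t)). lra. Qed.

Lemma cont_of_der (f : R -> R) x : (forall x, ex_derive f x) -> continuous f x.
Proof. intros H. apply (ex_derive_continuous (V:=R_NormedModule)). apply H. Qed.

Lemma dens_cont z : continuous gumbel_density z.
Proof. apply (ex_derive_continuous (V:=R_NormedModule)). unfold gumbel_density. auto_derive. auto. Qed.

Lemma hh_cont f t z : (forall x, ex_derive f x) -> continuous (hh f t) z.
Proof.
  intros Hf. unfold hh.
  apply (continuous_mult (fun z => f (z + aa t)) gumbel_density).
  - apply (continuous_comp (fun z => z + aa t) f).
    + apply (ex_derive_continuous (V:=R_NormedModule)). auto_derive. auto.
    + apply cont_of_der; auto.
  - apply dens_cont.
Qed.

Lemma lin_bound (f : R -> R) w : lipschitz_with 1 f -> Rabs (f w) <= Rabs (f 0) + Rabs w.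
Proof.
  intros H. specialize (H w 0). rewrite Rminus_0_r in H.
  pose proof (Rabs_triang_inv (f w) (f 0)). lra.
Qed.

Lemma hh_ex f t : (forall x, ex_derive f x) -> lipschitz_with 1 f ->
  ex_RInt_gen (hh f t) (at_point 0) (Rbar_locally p_infty).
Proof.
  intros Hd Hl.
  set (A := Rabs (f 0) + Rabs (aa t)).
  set (B := A + 2).
  apply (ex_RInt_gen_dom (hh f t) (fun z => B * exp (- (/2 * z)))
           (fun z => - (2 * B) * exp (- (/2 * z))) 0 0 _ (fun z => 0 < z)).
  - intros; apply hh_cont; auto.
  - exists 0. auto.
  - intros u v z Pu Pv Hz.
    assert (Hz0 : 0 < z).
    { destruct (Rle_dec u v). rewrite Rmin_left in Hz; lra. rewrite Rmin_right in Hz; lra. }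
    split; [|split].
    + unfold hh. rewrite Rabs_mult, (Rabs_pos_eq (gumbel_density z)) by apply dens_pos.
      pose proof (lin_bound f (z + aa t) Hl) as H1.
      pose proof (Rabs_triang z (aa t)) as H2. rewrite (Rabs_pos_eq z) in H2 by lra.
      pose proof (dens_eq z) as H3. pose proof (Phi_le1 z). pose proof (Phi_pos z).
      pose proof (exp_ineq1_le (/2 * z)) as H4.
      assert (E1 : exp (- z) = exp (- (/2 * z)) * exp (- (/2 * z))).
      { rewrite <- exp_plus. replace (- (/2 * z) + - (/2 * z)) with (- z) by field. reflexivity. }
      assert (E2 : exp (/2 * z) * exp (- (/2 * z)) = 1).
      { rewrite <- exp_plus, <- exp_0. replace (/2 * z + - (/2 * z)) with 0 by ring. reflexivity. }
      assert (E3 : exp (- (/2 * z)) <= 1).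
      { rewrite <- exp_0. left. apply exp_increasing. lra. }
      pose proof (exp_pos (- (/2 * z))) as P1. pose proof (exp_pos (/2 * z)) as P2.
      pose proof (dens_pos z).
      assert (Hf : Rabs (f (z + aa t)) <= A + z) by (unfold A; lra).
      set (e := exp (- (/2 * z))) in *. set (eh := exp (/2 * z)) in *.
      rewrite E1 in H3.
      apply Rle_trans with ((A + z) * (e * e)).
      { apply Rmult_le_compat. apply Rabs_pos. apply dens_pos. auto.
        rewrite H3. rewrite <- (Rmult_1_r (e * e)) at 2. apply Rmult_le_compat_l. nra. auto. }
      apply Rle_trans with ((A + 2 * eh) * (e * e)).
      { apply Rmult_le_compat_r. nra. lra. }
      assert (0 <= A) by (unfold A; pose proof (Rabs_pos (f 0)); pose proof (Rabs_pos (aa t)); lra).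
      unfold B. replace ((A + 2 * eh) * (e * e)) with (A * e * e + 2 * (eh * e) * e) by ring.
      rewrite E2. assert (A * e * e <= A * e). { assert (0 <= A * e) by nra. assert (A * e * e <= A * e * 1) by (apply Rmult_le_compat_l; auto). lra. } lra.
    + auto_derive. auto. field.
    + apply (ex_derive_continuous (V:=R_NormedModule)). auto_derive. auto.
  - assert (H : is_lim (fun z => - (2 * B) * exp (- (/2 * z))) p_infty (Rbar_mult (- (2 * B)) 0)).
    { apply is_lim_scal_l. apply lim_exp_neg. lra. }
    simpl in H. rewrite Rmult_0_r in H. exact H.
Qed.


Lemma garg_pos t x z : 0 < t -> gumbel_arg t x z = Rmax (x - t) (z + aa t).
Proof.
  intros Ht. unfold gumbel_arg, aa, ca. destruct (Rlt_le_dec 0 t); [reflexivity|lra].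
Qed.

Lemma P0_repr f t x : 0 < t -> (forall x, ex_derive f x) -> lipschitz_with 1 f ->
  is_RInt_gen (P0_integrand t f x) (Rbar_locally m_infty) (Rbar_locally p_infty) (G f t x).
Proof.
  intros Ht Hd Hl.
  set (b := x - t - aa t).
  set (c := f (x - t)).
  assert (Hex : forall u v, ex_RInt (hh f t) u v).
  { intros; apply (ex_RInt_continuous (V:=R_CompleteNormedModule)); intros; apply hh_cont; auto. }
  assert (DF : Derive (fun z => c * Phi z) = fun z => c * gumbel_density z).
  { apply functional_extensionality; intros z. apply is_derive_unique.
    apply is_derive_scal, Phi_deriv. }
  assert (HL : is_RInt_gen (P0_integrand t f x) (Rbar_locally m_infty) (at_point b) (c * Phi b)).
  { assert (H1 : is_RInt_gen (Derive (fun z => c * Phi z)) (Rbar_locally m_infty) (at_point b)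
              (c * Phi b - c * 0)).
    { apply is_RInt_gen_Derive.
      - apply filter_forall. intros; eexists; apply is_derive_scal, Phi_deriv.
      - apply filter_forall. intros. rewrite DF.
        apply (continuous_mult (fun _ => c) gumbel_density). apply continuous_const. apply dens_cont.
      - assert (H : is_lim (fun z => c * Phi z) m_infty (Rbar_mult c 0)).
        { apply is_lim_scal_l. apply lim_Phi_m. }
        exact H.
      - apply (lim_at_point (fun z => c * Phi z)). }
    rewrite Rmult_0_r, Rminus_0_r in H1.
    eapply is_RInt_gen_ext; [| exact H1].
    exists (fun u => u < b) (fun v => v = b).
    - exists b. auto.
    - reflexivity.
    - intros u v Hu -> z Hz. simpl in Hz. rewrite Rmin_left, Rmax_right in Hz by lra.
      rewrite DF. unfold P0_integrand. rewrite garg_pos by auto.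
      rewrite Rmax_left. reflexivity. unfold b in Hz. lra. }
  assert (HC : is_RInt_gen (hh f t) (at_point 0) (Rbar_locally p_infty) (CC f t)).
  { unfold CC. apply (RInt_gen_correct (V:=R_CompleteNormedModule)). apply hh_ex; auto. }
  assert (Hb0 : is_RInt_gen (hh f t) (at_point b) (at_point 0) (RInt (hh f t) b 0)).
  { apply is_RInt_gen_at_point. apply (RInt_correct (V:=R_CompleteNormedModule)). auto. }
  assert (HR : is_RInt_gen (P0_integrand t f x) (at_point b) (Rbar_locally p_infty)
                (plus (RInt (hh f t) b 0) (CC f t))).
  { eapply is_RInt_gen_ext; [| exact (is_RInt_gen_Chasles _ _ _ _ Hb0 HC)].
    exists (fun u => u = b) (fun v => b < v).
    - reflexivity.
    - exists b. auto.
    - intros u v -> Hv z Hz. simpl in Hz. rewrite Rmin_left, Rmax_right in Hz by lra.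
      unfold P0_integrand, hh. rewrite garg_pos by auto.
      rewrite Rmax_right. reflexivity. unfold b in Hz. lra. }
  pose proof (is_RInt_gen_Chasles _ _ _ _ HL HR) as H.
  replace (G f t x) with (plus (c * Phi b) (plus (RInt (hh f t) b 0) (CC f t))). exact H.
  unfold G. fold b. fold c. rewrite <- opp_RInt_swap by auto. reflexivity.
Qed.

Lemma is_derive_eqv (g : R -> R) x l l' : is_derive g x l -> l = l' -> is_derive g x l'.
Proof. intros H ->; exact H. Qed.

Lemma G_deriv f t x : (forall x, ex_derive f x) ->
  is_derive (G f t) x (Derive f (x - t) * Phi (x - t - aa t)).
Proof.
  intros Hd.
  assert (Hex : forall u v, ex_RInt (hh f t) u v).
  { intros; apply (ex_RInt_continuous (V:=R_CompleteNormedModule)); intros; apply hh_cont; auto. }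
  assert (D1 : is_derive (fun x => f (x - t)) x (Derive f (x - t))).
  { eapply is_derive_eqv. apply (is_derive_comp f (fun x => x - t)).
    apply Derive_correct, Hd. auto_derive; auto. simpl. unfold scal; simpl; unfold mult; simpl. ring. }
  assert (D2 : is_derive (fun x => Phi (x - t - aa t)) x (gumbel_density (x - t - aa t))).
  { eapply is_derive_eqv. apply (is_derive_comp Phi (fun x => x - t - aa t)).
    apply Phi_deriv. auto_derive; auto. simpl. unfold scal; simpl; unfold mult; simpl. ring. }
  assert (D3 : is_derive (fun x => RInt (hh f t) 0 (x - t - aa t)) x (hh f t (x - t - aa t))).
  { eapply is_derive_eqv. apply (is_derive_comp (RInt (hh f t) 0) (fun x => x - t - aa t)).
    apply (is_derive_RInt (V:=R_CompleteNormedModule) (hh f t) (RInt (hh f t) 0) 0).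
    apply filter_forall. intros; apply (RInt_correct (V:=R_CompleteNormedModule)); auto.
    apply hh_cont; auto.
    auto_derive; auto. simpl. unfold scal; simpl; unfold mult; simpl. ring. }
  unfold G.
  eapply is_derive_eqv.
  apply (is_derive_plus (fun x => f (x - t) * Phi (x - t - aa t))
                        (fun x => - RInt (hh f t) 0 (x - t - aa t) + CC f t)).
  apply (is_derive_mult (fun x => f (x - t)) (fun x => Phi (x - t - aa t))). exact D1. exact D2.
  intros; apply Rmult_comm.
  apply (is_derive_plus (fun x => - RInt (hh f t) 0 (x - t - aa t)) (fun _ => CC f t)).
  apply (is_derive_opp (fun x => RInt (hh f t) 0 (x - t - aa t))). exact D3.
  apply is_derive_const.
  unfold hh. replace (x - t - aa t + aa t) with (x - t) by ring.
  unfold plus, mult, opp, zero; simpl. ring.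
Qed.

Lemma L0_ex g x : (forall y, continuous (Derive g) y) -> (forall y, Rabs (Derive g y) <= 1) ->
  ex_RInt_gen (L0_integrand g x) (at_point 0) (Rbar_locally p_infty).
Proof.
  intros Hc Hb.
  apply (ex_RInt_gen_dom (L0_integrand g x) (fun y => exp (- y)) (fun y => - exp (- y)) 0 0 _ (fun _ => True)).
  - intros y. unfold L0_integrand.
    apply (continuous_mult (fun y => Derive g (x + y)) (fun y => exp (- y))).
    + apply (continuous_comp (fun y => x + y) (Derive g)).
      apply (ex_derive_continuous (V:=R_NormedModule)). auto_derive. auto. apply Hc.
    + apply (ex_derive_continuous (V:=R_NormedModule)). auto_derive. auto.
  - apply filter_true.
  - intros u v z _ _ _. split; [|split].
    + unfold L0_integrand. rewrite Rabs_mult, (Rabs_pos_eq (exp (- z))) by (left; apply exp_pos).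
      rewrite <- (Rmult_1_l (exp (- z))) at 2. apply Rmult_le_compat_r. left; apply exp_pos. apply Hb.
    + auto_derive. auto. ring.
    + apply (ex_derive_continuous (V:=R_NormedModule)). auto_derive. auto.
  - assert (H : is_lim (fun y => - exp (- y)) p_infty (Rbar_opp 0)).
    { apply is_lim_opp, lim_negexp_p. }
    simpl in H. rewrite Ropp_0 in H. exact H.
Qed.


Lemma shift_lim c : filterlim (fun y => c + y) (Rbar_locally p_infty) (Rbar_locally p_infty).
Proof.
  intros P [M HM]. exists (M - c). intros y Hy. apply HM. lra.
Qed.

Lemma L0_bound f t M x : 0 < t -> (forall x, ex_derive f x) ->
  (forall y, Rabs (Derive f y) <= M) ->
  Derive (G f t) = (fun x => Derive f (x - t) * Phi (x - t - aa t)) ->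
  ex_RInt_gen (L0_integrand (G f t) x) (at_point 0) (Rbar_locally p_infty) ->
  Rabs (L0 (G f t) x) <= 2 / (1 - exp (- t)) * M.
Proof.
  intros Ht Hd HM DG Hex.
  fold (ca t).
  assert (Hc := ca_pos t Ht).
  assert (HM0 : 0 <= M) by (eapply Rle_trans; [apply Rabs_pos | apply (HM 0)]).
  set (a := aa t) in *.
  set (beta := exp (- x + t + a)).
  assert (Hbeta : 0 < beta) by apply exp_pos.
  set (K := fun y => M / beta * Phi (x + y - t - a)).
  set (k := fun y => M / beta * gumbel_density (x + y - t - a)).
  assert (DK : Derive K = k).
  { apply functional_extensionality; intros y. apply is_derive_unique. unfold K, k.
    apply is_derive_scal. eapply is_derive_eqv.
    apply (is_derive_comp Phi (fun y => x + y - t - a)). apply Phi_deriv.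
    auto_derive; auto. simpl. unfold scal; simpl; unfold mult; simpl. ring. }
  assert (HK : is_RInt_gen k (at_point 0) (Rbar_locally p_infty) (M / beta * 1 - K 0)).
  { rewrite <- DK. apply is_RInt_gen_Derive.
    - apply filter_forall. intros. eexists. unfold K. apply is_derive_scal.
      apply (is_derive_comp Phi (fun y => x + y - t - a)). apply Phi_deriv.
      auto_derive; auto.
    - apply filter_forall. intros. rewrite DK. unfold k.
      apply (ex_derive_continuous (V:=R_NormedModule)). unfold gumbel_density. auto_derive. auto.
    - apply lim_at_point.
    - unfold K. apply (filterlim_comp _ _ _ (fun y => Phi (x + y - t - a)) (fun p => M / beta * p)
                        _ (locally 1)).
      + apply (filterlim_ext (fun y => Phi (x - t - a + y))).
        intros; f_equal; ring.
        apply (filterlim_comp _ _ _ (fun y => x - t - a + y) Phi _ (Rbar_locally p_infty)).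
        apply shift_lim. apply lim_Phi_p.
      + apply (ex_derive_continuous (V:=R_NormedModule) (fun p => M / beta * p)). auto_derive. auto. }
  assert (HI := RInt_gen_correct (V:=R_CompleteNormedModule) _ Hex).
  set (I := RInt_gen (L0_integrand (G f t) x) (at_point 0) (Rbar_locally p_infty)) in *.
  assert (Hexpu : forall y, exp (- (x + y - t - a)) = beta * exp (- y)).
  { intros y. unfold beta. rewrite <- exp_plus. f_equal. ring. }
  assert (Hn : norm I <= M / beta * 1 - K 0).
  { refine (RInt_gen_norm (V:=R_CompleteNormedModule) (L0_integrand (G f t) x) k I _ _ _ HI HK).
    - exists (fun u => u = 0) (fun v => 0 < v). reflexivity. exists 0; auto.
      intros u v -> Hv. simpl. lra.
    - exists (fun u => u = 0) (fun v => 0 < v). reflexivity. exists 0; auto.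
      intros u v _ _ y _. change (Rabs (L0_integrand (G f t) x y) <= k y).
      unfold L0_integrand, k. rewrite DG, dens_eq, Hexpu.
      replace (x + y - t) with (x + y - t) by ring.
      pose proof (Phi_pos (x + y - t - a)). pose proof (exp_pos (- y)).
      replace (M / beta * (beta * exp (- y) * Phi (x + y - t - a)))
        with (M * Phi (x + y - t - a) * exp (- y)) by (field; lra).
      rewrite !Rabs_mult, (Rabs_pos_eq (Phi _)), (Rabs_pos_eq (exp (- y))) by lra.
      apply Rmult_le_compat_r. lra. apply Rmult_le_compat_r. lra.
      replace (x + y - t) with (x + y - t) by ring. apply HM. }
  change (Rabs I <= M / beta * 1 - K 0) in Hn.
  assert (HK0 : 0 <= K 0).
  { unfold K. apply Rmult_le_pos. apply Rmult_le_pos; auto. left; apply Rinv_0_lt_compat; auto.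
    left; apply Phi_pos. }
  assert (HD : Rabs (Derive (G f t) x) <= M).
  { rewrite DG. rewrite Rabs_mult, (Rabs_pos_eq (Phi _)) by (left; apply Phi_pos).
    rewrite <- (Rmult_1_r M). apply Rmult_le_compat. apply Rabs_pos. left; apply Phi_pos.
    apply HM. apply Phi_le1. }
  assert (Hea : exp a = ca t) by (unfold a, aa; apply exp_ln; auto).
  assert (Hxb : exp (- x) * (M / beta) = M * exp (- t) / ca t).
  { unfold beta. rewrite !exp_plus, Hea.
    assert (exp t * exp (- t) = 1) by (rewrite <- exp_plus, <- exp_0; f_equal; ring).
    pose proof (exp_pos (- x)). pose proof (exp_pos t). rewrite (exp_Ropp t). field. repeat split; lra. }
  unfold L0. fold I.
  eapply Rle_trans. apply Rabs_triang. rewrite Rabs_Ropp, Rabs_mult, (Rabs_pos_eq (exp (- x))) by (left; apply exp_pos).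
  assert (exp (- x) * Rabs I <= exp (- x) * (M / beta)).
  { apply Rmult_le_compat_l. left; apply exp_pos. lra. }
  rewrite Hxb in H.
  assert (Hc1 : ca t = 1 - exp (- t)) by reflexivity.
  assert (M + M * exp (- t) / ca t = M / ca t).
  { replace (exp (- t)) with (1 - ca t) by (rewrite Hc1; ring). field. lra. }
  assert (M / ca t <= 2 / ca t * M).
  { unfold Rdiv. assert (0 <= M * / ca t) by (apply Rmult_le_pos; auto; left; apply Rinv_0_lt_compat; auto). nra. }
  lra.
Qed.

Lemma Phi_lip : lipschitz_with 1 Phi.
Proof.
  apply (lip_of_deriv Phi gumbel_density 1). apply Phi_deriv.
  intros; rewrite Rabs_pos_eq by apply dens_pos; apply dens_le1.
Qed.

Lemma P0_zero_is f x : is_RInt_gen (P0_integrand 0 f x) (Rbar_locally m_infty) (Rbar_locally p_infty) (f x).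
Proof.
  set (c := f x).
  assert (DF : Derive (fun z => c * Phi z) = fun z => c * gumbel_density z).
  { apply functional_extensionality; intros z. apply is_derive_unique.
    apply is_derive_scal, Phi_deriv. }
  assert (H1 : is_RInt_gen (Derive (fun z => c * Phi z)) (Rbar_locally m_infty) (Rbar_locally p_infty)
              (c * 1 - c * 0)).
  { apply is_RInt_gen_Derive.
    - apply filter_forall. intros; eexists; apply is_derive_scal, Phi_deriv.
    - apply filter_forall. intros. rewrite DF.
      apply (continuous_mult (fun _ => c) gumbel_density). apply continuous_const. apply dens_cont.
    - assert (H : is_lim (fun z => c * Phi z) m_infty (Rbar_mult c 0)).
      { apply is_lim_scal_l. apply lim_Phi_m. }
      exact H.
    - assert (H : is_lim (fun z => c * Phi z) p_infty (Rbar_mult c 1)).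
      { apply is_lim_scal_l. apply lim_Phi_p. }
      exact H. }
  replace (c * 1 - c * 0) with c in H1 by ring.
  eapply is_RInt_gen_ext; [| exact H1].
  apply filter_forall. intros ab z _. rewrite DF. unfold P0_integrand, gumbel_arg.
  destruct (Rlt_le_dec 0 0). lra. rewrite Rminus_0_r. reflexivity.
Qed.

Lemma P0_zero f x : P0 0 f x = f x.
Proof.
  unfold P0. apply (is_RInt_gen_unique (V:=R_CompleteNormedModule)). apply P0_zero_is.
Qed.

Theorem corollary2p5 (f : R -> R) :
  in_Lip2 f ->
  lipschitz_with 1 f ->
  lipschitz_with 1 (Derive f) ->
  forall t : R, 0 <= t ->
    (forall x, ex_RInt_gen (P0_integrand t f x)
                 (Rbar_locally m_infty) (Rbar_locally p_infty)) /\
    in_Lip2 (P0 t f) /\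
    lipschitz_with 1 (P0 t f) /\
    lipschitz_with 2 (Derive (P0 t f)) /\
    (forall x, ex_RInt_gen (L0_integrand (P0 t f) x)
                 (at_point 0) (Rbar_locally p_infty)) /\
    (0 < t -> forall M : R, (forall x, Rabs (Derive f x) <= M) ->
       forall x, Rabs (L0 (P0 t f) x) <= 2 / (1 - exp (- t)) * M).
Proof.
  intros [Hd _] Hl HlD t Ht.
  assert (Hf1 : forall y, Rabs (Derive f y) <= 1).
  { intros y. apply (deriv_bound_lip 1 f y _ Hl). apply Derive_correct, Hd. }
  destruct (Rle_lt_or_eq_dec 0 t Ht) as [Htp | Ht0].
  - assert (HP : P0 t f = G f t).
    { apply functional_extensionality; intros x. unfold P0.
      apply (is_RInt_gen_unique (V:=R_CompleteNormedModule)). apply P0_repr; auto. }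
    set (D := fun x => Derive f (x - t) * Phi (x - t - aa t)).
    assert (DG : Derive (G f t) = D).
    { apply functional_extensionality; intros x. apply is_derive_unique. apply G_deriv; auto. }
    assert (HDb : forall x, Rabs (D x) <= 1).
    { intros x. unfold D. rewrite Rabs_mult, (Rabs_pos_eq (Phi _)) by (left; apply Phi_pos).
      rewrite <- (Rmult_1_r 1). apply Rmult_le_compat. apply Rabs_pos. left; apply Phi_pos.
      apply Hf1. apply Phi_le1. }
    assert (HDl : lipschitz_with 2 D).
    { intros x y. unfold D.
      set (u := x - t). set (v := y - t).
      replace (Derive f u * Phi (u - aa t) - Derive f v * Phi (v - aa t))
        with ((Derive f u - Derive f v) * Phi (u - aa t) + Derive f v * (Phi (u - aa t) - Phi (v - aa t))) by ring.
      eapply Rle_trans. apply Rabs_triang. rewrite !Rabs_mult.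
      rewrite (Rabs_pos_eq (Phi _)) by (left; apply Phi_pos).
      pose proof (HlD u v). pose proof (Phi_lip (u - aa t) (v - aa t)).
      replace (u - aa t - (v - aa t)) with (x - y) in H0 by (unfold u, v; ring).
      replace (u - v) with (x - y) in H by (unfold u, v; ring).
      pose proof (Phi_le1 (u - aa t)). pose proof (Phi_pos (u - aa t)).
      pose proof (Hf1 v). pose proof (Rabs_pos (x - y)).
      pose proof (Rabs_pos (Derive f u - Derive f v)).
      pose proof (Rabs_pos (Phi (u - aa t) - Phi (v - aa t))). pose proof (Rabs_pos (Derive f v)).
      nra. }
    assert (HGl : lipschitz_with 1 (G f t)).
    { apply (lip_of_deriv (G f t) D 1). intros; apply G_deriv; auto. auto. }
    rewrite HP.
    split; [|split; [|split; [|split; [|split]]]].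
    + intros x. exists (G f t x). apply P0_repr; auto.
    + split. intros x; eexists; apply G_deriv; auto.
      split. exists 1; auto. exists 2. rewrite DG; auto.
    + auto.
    + rewrite DG; auto.
    + intros x. apply L0_ex. rewrite DG. intros; apply (lip_continuous 2); auto.
      rewrite DG; auto.
    + intros _ M HM x. apply L0_bound; auto.
      apply L0_ex. rewrite DG. intros; apply (lip_continuous 2); auto.
      rewrite DG; auto.
  - subst t.
    assert (HP : P0 0 f = f) by (apply functional_extensionality; apply P0_zero).
    split; [|split; [|split; [|split; [|split]]]].
    + intros x. exists (f x). apply P0_zero_is.
    + rewrite HP. split; auto. split; exists 1; auto.
    + rewrite HP; auto.
    + rewrite HP. intros x y. pose proof (HlD x y). pose proof (Rabs_pos (x - y)). lra.
    + intros x. rewrite HP. apply L0_ex; auto. intros; apply (lip_continuous 1); auto.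
    + intros H. lra.
Qed.
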